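(* Let $k\ge2$ and $n\le0$. Then $\mathcal{F}_{n,k}(x)$ is the zero polynomial if and only if $q_{n,k}<r_{n,k}$. Equivalently, $\mathcal{F}_{n,k}\equiv0$ exactly when $|n|\in\{kq+q,\,kq+q+1,\dots,kq+k-2\}$ for some $q\in\{0,1,\dots,k-2\}$; this is a block of $k-q-1$ consecutive indices for each such $q$. In particular, $\mathcal{F}_{n,k}\not\equiv0$ whenever $|n|\ge k^2-k-1$, and there are exactly $k(k-1)/2$ indices $n\le0$ (the $k-1$ initial values included) for which $\mathcal{F}_{n,k}\equiv0$.
   Context: For $k\ge2$, the polynomials $\mathcal{F}_{n,k}(x)\in\mathbb{Z}[x]$ ($n\in\mathbb{Z}$) are defined by $\mathcal{F}_{1,k}=1$, $\mathcal{F}_{n,k}=0$ for $n=0,-1,\dots,-(k-2)$, and $\mathcal{F}_{n,k}(x)=\sum_{j=1}^{k}x^{k-j}\mathcal{F}_{n-j,k}(x)$ for all $n\in\mathbb{Z}$. This recurrence is used upwards for $n\ge2$, and downwards for $n\le-(k-1)$ as $\mathcal{F}_{n,k}=\mathcal{F}_{n+k,k}-\sum_{j=1}^{k-1}x^j\mathcal{F}_{n+j,k}$. For $n\le0$, set $q_{n,k}=\lfloor(|n|+1)/k\rfloor$ and let $r_{n,k}\in\{0,\dots,k-1\}$ be the residue of $|n|+1$ modulo $k$. Then $|n|+1=kq_{n,k}+r_{n,k}$. *)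

(* Defs.v *)
From mathcomp Require Import all_boot all_order all_algebra.
Set Implicit Arguments. Unset Strict Implicit. Unset Printing Implicit Defensive.
Import Order.TTheory GRing.Theory Num.Theory.
Local Open Scope ring_scope.

(* Downward values: Gseq k N = [:: G 0; ...; G (N-1)] with G m = F_{1-m,k}. *)
Fixpoint Gseq (k : nat) (N : nat) : seq {poly int} :=
  match N with
  | 0 => [::]
  | N'.+1 =>
    let s := Gseq k N' in
    let m := size s in
    rcons s (if m == 0%N then 1
             else if (m < k)%N then 0
             else nth 0 s (m - k) - \sum_(1 <= j < k) 'X^j * nth 0 s (m - j))
  end.

(* Upward values: Useq k N = [:: U 0; ...; U (N-1)] with U i = F_{i+2-k,k}. *)
Fixpoint Useq (k : nat) (N : nat) : seq {poly int} :=
  match N with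
  | 0 => [::]
  | N'.+1 =>
    let s := Useq k N' in
    let i := size s in
    rcons s (if (i < k.-1)%N then 0
             else if i == k.-1 then 1
             else \sum_(1 <= j < k.+1) 'X^(k - j) * nth 0 s (i - j))
  end.

Definition Fib (k : nat) (n : int) : {poly int} :=
  if (1 <= n)%R then nth 0 (Useq k (`|n| + k - 1)%N) (`|n| + k - 2)%N
  else nth 0 (Gseq k (`|n| + 2)%N) (`|n| + 1)%N.

Definition qnk (n : int) (k : nat) : nat := ((`|n| + 1) %/ k)%N.
Definition rnk (n : int) (k : nat) : nat := ((`|n| + 1) %% k)%N.

(* Main.v *)
Require Import Defs.
From mathcomp Require Import all_boot all_order all_algebra.
From mathcomp Require Import zify ring.
Import Order.TTheory GRing.Theory Num.Theory.
Local Open Scope ring_scope.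

Lemma size_Gseq k N : size (Gseq k N) = N.
Proof. by elim: N => //= N IH; rewrite size_rcons IH. Qed.

Lemma Gseq_prefix k N d m : (m < N)%N ->
  nth 0 (Gseq k (N + d)) m = nth 0 (Gseq k N) m.
Proof.
move=> mN; elim: d => [|d IH]; first by rewrite addn0.
by rewrite addnS /= nth_rcons size_Gseq (ltn_addr d mN) IH.
Qed.

Definition g k m := nth 0 (Gseq k m.+1) m.

Lemma Gseq_g k N m : (m < N)%N -> nth 0 (Gseq k N) m = g k m.
Proof.
move=> mN; rewrite /g -(subnKC mN) Gseq_prefix //.
Qed.

Lemma g_eq k m : (0 < k)%N -> g k m = if m == 0%N then 1 else if (m < k)%N then 0
   else g k (m - k) - \sum_(1 <= j < k) 'X^j * g k (m - j).
Proof.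
move=> k0; rewrite {1}/g /= nth_rcons size_Gseq ltnn eqxx.
case: eqP => [_|m0] //.
case: ifP => // /negbT; rewrite -leqNgt => km.
congr (_ - _); first by rewrite Gseq_g //; lia.
apply: eq_big_nat => j /andP [j1 jk]; rewrite Gseq_g //; lia.
Qed.

Lemma g_S k m : (0 < k)%N -> (k <= m)%N ->
  \sum_(0 <= j < k) 'X^j * g k (m - j) = g k (m - k).
Proof.
move=> k0 km; rewrite big_ltn // expr0 mul1r subn0 {1}(@g_eq k m k0).
have -> : (m == 0%N) = false by apply/negbTE; lia.
by rewrite ltnNge km /= subrK.
Qed.

Lemma g_rec k m : (0 < k)%N -> (k < m)%N ->
  g k m = (1 + 'X^k) * g k (m - k) - 'X * g k (m - k.+1).
Proof.
move=> k0 km.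
have eT : 'X * g k (m - k.+1) =
   \sum_(1 <= j < k) 'X^j * g k (m - j) + 'X^k * g k (m - k).
  have -> : (m - k.+1 = m.-1 - k)%N by lia.
  rewrite -g_S //; last by lia.
  rewrite mulr_sumr -big_nat_recr //= big_add1 /=.
  apply: eq_big_nat => j /andP [_ jk].
  have -> : (m.-1 - j = m - j.+1)%N by lia.
  by rewrite exprS mulrA.
rewrite eT {1}(@g_eq k m k0).
have -> : (m == 0%N) = false by apply/negbTE; lia.
rewrite ltnNge ltnW //=.
rewrite mulrDl mul1r; ring.
Qed.

Lemma g_coef k (k0 : (0 < k)%N) q : forall r, (r < k)%N ->
  [/\ ((q < r)%N -> g k (k*q + r) = 0),
      (forall j, (j < r)%N -> (g k (k*q+r))`_j = 0)
    & (g k (k*q+r))`_r = (-1)^+r * ('C(q,r))%:R].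
Proof.
elim: q => [|q IH] r rk.
  rewrite muln0 add0n (@g_eq k r k0) rk.
  case: r rk => [|r] rk /=.
    by split => //; rewrite coef1 expr0 mul1r.
  by split => // [j _|]; rewrite coef0 // bin0n mulr0.
case: r rk => [|r] rk.
  rewrite addn0; split => //.
  case: q IH => [|q] IH.
    rewrite muln1 (@g_eq k k k0) ltnn.
    have -> : (k == 0%N) = false by apply/negbTE; lia.
    rewrite (eq_big_nat _ _ (F2 := fun=> 0)); last first.
      move=> j /andP [j1 jk]; rewrite (@g_eq k (k - j) k0).
      have -> : (k - j == 0)%N = false by apply/negbTE; lia.
      have -> : (k - j < k)%N by lia.
      by rewrite mulr0.
    by rewrite big1 // subnn (@g_eq k 0 k0) eqxx subr0 coef1 expr0 mul1r bin0.
  rewrite g_rec //; last by rewrite mulnS; nia.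
  have -> : (k * q.+2 - k = k * q.+1 + 0)%N by rewrite (mulnS k q.+1); lia.
  have [_ _ c0] := IH 0%N k0.
  rewrite coefB mulrDl mul1r coefD coefXnM k0 coefXM eqxx addr0 subr0 c0.
  by rewrite !bin0.
rewrite g_rec //; last by rewrite mulnS; nia.
have -> : (k * q.+1 + r.+1 - k = k * q + r.+1)%N by rewrite mulnS; lia.
have -> : (k * q.+1 + r.+1 - k.+1 = k * q + r)%N by rewrite mulnS; lia.
have [z1 c1 d1] := IH r.+1 rk.
have [z2 c2 d2] := IH r (ltnW rk).
split.
- move=> qr; rewrite z1 ?z2 ?mulr0 ?subr0 //; lia.
- move=> j jr; rewrite coefB mulrDl mul1r coefD coefXnM coefXM c1 //.
  have -> : (j < k)%N by lia.
  case: (j =P 0%N) => [_|/eqP j0]; first by rewrite addr0 subr0.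
  rewrite c2; [by rewrite addr0 subr0 | lia].
- rewrite coefB mulrDl mul1r coefD coefXnM coefXM rk /= d1 d2 binS natrD exprS.
  ring.
Qed.

Lemma gzero k m : (0 < k)%N -> g k m = 0 <-> (m %/ k < m %% k)%N.
Proof.
move=> k0; rewrite {1}(divn_eq m k) mulnC.
have rk := ltn_pmod m k0.
have [z c d] := @g_coef k k0 (m %/ k) _ rk.
split => [H|]; last by move=> h; apply: z.
move: d; rewrite H coef0 => /esym /eqP; rewrite mulf_eq0 signr_eq0 /= pnatr_eq0.
by rewrite eqn0Ngt bin_gt0 -ltnNge.
Qed.

Lemma Fib_neg k n : n <= 0 -> Fib k n = g k (`|n| + 1).
Proof.
move=> n0; rewrite /Fib.
have -> : (1 <= n) = false by apply/negbTE; rewrite -ltNge; lia.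
by rewrite Gseq_g //; lia.
Qed.

Lemma arith2 k a : (2 <= k)%N ->
  (a.+1 %/ k < a.+1 %% k)%N <->
  exists q : nat, (q <= k - 2)%N /\ (k * q + q <= a <= k * q + k - 2)%N.
Proof.
move=> k2; have k0 : (0 < k)%N by lia.
split.
  move=> H; exists (a.+1 %/ k)%N.
  have rk := div.ltn_pmod a.+1 k0.
  have e := divn_eq a.+1 k; rewrite mulnC in e.
  move: H rk e; set q := (a.+1 %/ k)%N; set r := (a.+1 %% k)%N => H rk e.
  nia.
move=> [q [qk /andP [h1 h2]]].
have e : (a.+1 = q * k + (a.+1 - k * q))%N by nia.
have rk : (a.+1 - k * q < k)%N by nia.
rewrite e divnMDl // divn_small // addn0 modnMDl modn_small //; nia.
Qed.

Lemma arith3 k a : (2 <= k)%N -> (k ^ 2 - k - 1 <= a)%N ->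
  ~~ (a.+1 %/ k < a.+1 %% k)%N.
Proof.
move=> k2 ha; apply/negP => H.
have k0 : (0 < k)%N by lia.
have rk := div.ltn_pmod a.+1 k0.
have e := divn_eq a.+1 k; rewrite mulnC in e.
move: H rk e ha; set q := (a.+1 %/ k)%N; set r := (a.+1 %% k)%N => H rk e ha.
have qk : (q <= k - 2)%N by lia.
have : (k * q <= k * (k - 2))%N by apply: leq_mul.
rewrite mulnBr expnS expn1 in ha *.
nia.
Qed.

Lemma count_gt Q n : count (fun r => Q < r)%N (iota 0 n) = (n.-1 - Q)%N.
Proof.
elim: n => [|n IH] //.
rewrite -[n.+1]addn1 iotaD count_cat IH /= add0n addn0.
case: ltnP => h; lia.
Qed.

Lemma count_block k Q : (0 < k)%N ->
  count (fun m => m %/ k < m %% k)%N (iota 0 (k * Q)) = (\sum_(q < Q) (k.-1 - q))%N.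
Proof.
move=> k0; elim: Q => [|Q IH]; first by rewrite muln0 big_ord0.
rewrite mulnS addnC iotaD count_cat IH big_ord_recr /=; congr addn.
rewrite add0n -[(k * Q)%N]addn0 iotaDl count_map -count_gt.
apply: eq_in_count => r; rewrite mem_iota add0n => /= rk.
by rewrite mulnC divnMDl // divn_small // addn0 modnMDl modn_small.
Qed.

Lemma tri k : (\sum_(q < k.-1) (k.-1 - q) = (k * (k - 1)) %/ 2)%N.
Proof.
rewrite -(big_mkord xpredT (fun q => k.-1 - q)%N) big_nat_rev /=.
rewrite (eq_big_nat _ _ (F2 := fun q => q.+1)); last by move=> i /andP [_ h]; lia.
case: k => [|k]; first by rewrite big_geq.
have -> : (\sum_(0 <= i < k.+1.-1) i.+1 = \sum_(0 <= i < k.+1) i)%N.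
  by rewrite [RHS]big_ltn // big_add1.
rewrite bin2_sum bin2 divn2 subn1.
by [].
Qed.

Theorem mainTheorem4 (k : nat) : (2 <= k)%N ->
  [/\ (forall n : int, n <= 0 -> (Fib k n = 0 <-> (qnk n k < rnk n k)%N)),
      (forall n : int, n <= 0 ->
         (Fib k n = 0 <->
          exists q : nat, (q <= k - 2)%N /\ (k * q + q <= `|n| <= k * q + k - 2)%N)),
      (forall n : int, n <= 0 -> (k ^ 2 - k - 1 <= `|n|)%N -> Fib k n != 0)
    & (forall N : nat, (k ^ 2 - k - 1 <= N)%N ->
         count (fun m : nat => Fib k (- (m%:Z)) == 0%R) (iota 0 N) = (k * (k - 1)) %/ 2)%N].
Proof.
move=> k2; have k0 : (0 < k)%N by lia.
have P1 : forall n : int, n <= 0 -> (Fib k n = 0 <-> (qnk n k < rnk n k)%N).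
  by move=> n n0; rewrite Fib_neg // gzero // addn1.
split => //.
- move=> n n0; rewrite P1 // /qnk /rnk addn1; exact: arith2.
- move=> n n0 h; apply/eqP; rewrite P1 // /qnk /rnk addn1 => H.
  by move: (@arith3 k _ k2 h); rewrite H.
move=> N hN.
have E : forall m, (Fib k (- (m%:Z)) == 0) = (m.+1 %/ k < m.+1 %% k)%N.
  move=> m; apply/eqP/idP; rewrite Fib_neg ?oppr_le0 // abszN absz_nat addn1 gzero //.
rewrite (eq_count E) -(subnKC hN) iotaD count_cat.
rewrite [X in (_ + X)%N](@eq_in_count _ _ pred0); last first.
  move=> m; rewrite mem_iota => /andP [h _]; apply/negbTE; apply: arith3 => //; lia.
rewrite count_pred0 addn0.
set N0 := (k ^ 2 - k - 1)%N.
have eN : (N0.+1 = k * (k - 1))%N.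
  rewrite /N0 mulnBr muln1 expnS expn1; nia.
transitivity (count (fun m => m %/ k < m %% k)%N (iota 0 N0.+1)).
  rewrite /= div0n mod0n ltnn add0n -[1%N]addn0 iotaDl count_map.
  by apply: eq_count => m /=; rewrite add1n.
rewrite eN -[(k-1)%N]prednK ?count_block // ?prednK; try lia.
by rewrite -tri subn1.
Qed.
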